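(* Let $X$ be a connected, non-bipartite strongly regular graph with parameters $(n,k,a,c)$ (every vertex has degree $k$, any two adjacent vertices have exactly $a$ common neighbours, any two distinct non-adjacent vertices have exactly $c$ common neighbours), where $k\ge 3$ and $k>c\ge 1$. Assume that $s^2=(a-c)^2+4(k-c)$ for some positive integer $s$, so that the eigenvalues of the adjacency matrix other than $k$ are the integers $\lambda_1=\frac{a-c+s}{2}=:e$ and $\lambda_2=\frac{a-c-s}{2}$ (so $e\ge 1$, $k=(e+1)c+e(e-a)$ and $\lambda_2=a-c-e$). Suppose the Krein parameter $$K_2=(k+\lambda_2)(\lambda_1+1)^2-(\lambda_2+1)(k+\lambda_2+2\lambda_1\lambda_2)$$ satisfies $K_2\ge 0$. Then $$c\le\begin{cases} e^2+e+2a & \text{if } e\ge 3,\\ e^2+e+3a & \text{if } e=1 \text{ or } e=2.\end{cases}$$ In particular, when $a=0$ we have $c\le e(e+1)$.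
   Context: The condition $K_2\ge 0$ is one of the Krein conditions. Expressed in terms of $a,c,e$, one has $K_2=P+Qc-ec^2$ with $P=(e+1)(e-a)(e^2-e+a)$ and $Q=e^3+(2a+1)e+a$. *)

(* Defs.v *)
From mathcomp Require Import all_boot all_order all_algebra.
Set Implicit Arguments. Unset Strict Implicit. Unset Printing Implicit Defensive.
Import Order.TTheory GRing.Theory Num.Theory.

(* Strongly regular with parameters (k, a, c) (the number of vertices n = #|T|
   is stated separately). *)
Definition srg (T : finType) (E : rel T) (k a c : nat) : Prop :=
  [/\ symmetric E, irreflexive E,
      (forall x : T, #|[set y | E x y]| = k),
      (forall x y : T, x != y -> E x y -> #|[set z | E x z && E y z]| = a) &
      (forall x y : T, x != y -> ~~ E x y -> #|[set z | E x z && E y z]| = c)].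

Definition graph_connected (T : finType) (E : rel T) : Prop :=
  forall x y : T, connect E x y.

Definition bipartite (T : finType) (E : rel T) : Prop :=
  exists f : T -> bool, forall x y : T, E x y -> f x != f y.

Definition krein2 (k e l2 : int) : int :=
  (k + l2) * (e + 1) ^+ 2 - (l2 + 1) * (k + l2 + 2 * e * l2).

(* Main.v *)
Require Import Defs.
From mathcomp Require Import all_boot all_order all_algebra.
From mathcomp Require Import ring lra zify.
Import Order.TTheory GRing.Theory Num.Theory.
Local Open Scope ring_scope.

Lemma L3 (e a c : int) : 3 <= e -> 0 <= a -> e^+2 + e + 2*a < c ->
  krein2 ((e+1)*c + e*(e-a)) e (a-c-e) < 0.
Proof.
move=> h3 ha hc.
have ht : 0 <= c - (e^+2 + e + 2*a + 1) by rewrite subr_ge0 lezD1.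
have hu : 0 <= e - 3 by rewrite subr_ge0.
move: ht hu.
set t := c - _; set u := e - 3.
have eE : e = u + 3 by rewrite /u; ring.
have cE : c = (u+3)^+2 + (u+3) + 2*a + 1 + t by rewrite /t eE; ring.
clearbody t u; rewrite cE eE /krein2 => ht hu.
have hua := mulr_ge0 hu ha. have hut := mulr_ge0 hu ht. have hat := mulr_ge0 ha ht.
have huu := mulr_ge0 hu hu. have haa := mulr_ge0 ha ha. have htt := mulr_ge0 ht ht.
have h1 := mulr_ge0 hu huu. have h2 := mulr_ge0 hu hut. have h3' := mulr_ge0 hu hua.
have h4 := mulr_ge0 hu htt. have h5 := mulr_ge0 hu hat. have h6 := mulr_ge0 hu haa.
have h7 := mulr_ge0 huu hut. have h8 := mulr_ge0 huu hua.
have h9 := mulr_ge0 h1 ht. have h10 := mulr_ge0 h1 ha.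
nra.
Qed.

Lemma L12 (e a c : int) : (e = 1 \/ e = 2) -> 0 <= a -> e^+2 + e + 3*a < c ->
  krein2 ((e+1)*c + e*(e-a)) e (a-c-e) < 0.
Proof.
move=> he ha hc.
have ht : 0 <= c - (e^+2 + e + 3*a + 1) by rewrite subr_ge0 lezD1.
move: ht; set t := c - _.
have cE : c = e^+2 + e + 3*a + 1 + t by rewrite /t; ring.
clearbody t; rewrite cE /krein2 => ht.
have hat := mulr_ge0 ha ht. have haa := mulr_ge0 ha ha. have htt := mulr_ge0 ht ht.
case: he => ->; nra.
Qed.

Theorem theorem2p1 (T : finType) (E : rel T) (n k a c s : nat) (e : int) :
  #|T| = n ->
  srg E k a c ->
  graph_connected E ->
  ~ bipartite E ->
  (3 <= k)%N -> (c < k)%N -> (1 <= c)%N ->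
  (0 < s)%N ->
  (s%:Z) ^+ 2 = (a%:Z - c%:Z) ^+ 2 + 4 * (k%:Z - c%:Z) ->
  2 * e = a%:Z - c%:Z + s%:Z ->
  0 <= krein2 k%:Z e (a%:Z - c%:Z - e) ->
  [/\ (3 <= e -> c%:Z <= e ^+ 2 + e + 2 * a%:Z),
      (e = 1 \/ e = 2 -> c%:Z <= e ^+ 2 + e + 3 * a%:Z) &
      (a = 0%N -> c%:Z <= e * (e + 1))].
Proof.
move=> _ _ _ _ _ Hck0 _ _ Hsq He Hkr.
have Hck' : c%:Z < k%:Z by rewrite ltz_nat.
have a0 : a = 0%N -> a%:Z = 0 by move=> ->.
clear Hck0.
have ha : 0 <= a%:Z by [].
have hs0 : 0 <= s%:Z by [].
move: Hsq He Hkr Hck' ha hs0 a0.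
move: (k%:Z) (a%:Z) (c%:Z) (s%:Z) => K A C S Hsq He Hkr Hck ha hs a0.
have sE : S = 2*e - A + C by rewrite He; ring.
have kE : K = (e+1)*C + e*(e-A).
  have : 4 * K = 4 * ((e+1)*C + e*(e-A)) by move: Hsq; rewrite sE => H; nra.
  by move/(mulfI _) ; apply.
have e1 : 0 < e.
  apply/negPn/negP; rewrite -leNgt => hle.
  have h1 : S <= C - A by nra.
  nra.
rewrite kE in Hkr.
have P3 : 3 <= e -> C <= e ^+ 2 + e + 2 * A.
  move=> h3; rewrite leNgt; apply/negP => hlt.
  by have := @L3 e A C h3 ha hlt; rewrite ltNge Hkr.
have P12 : e = 1 \/ e = 2 -> C <= e ^+ 2 + e + 3 * A.
  move=> h12; rewrite leNgt; apply/negP => hlt.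
  by have := @L12 e A C h12 ha hlt; rewrite ltNge Hkr.
split => // /a0 A0.
have : e = 1 \/ e = 2 \/ 3 <= e by lia.
case=> [h|[h|h]]; [have:= P12 (or_introl h)| have:= P12 (or_intror h)| have := P3 h]; rewrite A0; nra.
Qed.
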